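(* Let $K\in\mathbb{N}$ and let $\mathcal{S}$ be a collection of subsets $S\subset[K]$, each containing exactly four elements, such that every index $j\in[K]$ is contained in at most two sets of $\mathcal{S}$. Then there exist subsets $T(S)\subset S$, one for each $S\in\mathcal{S}$, such that $|T(S)|\ge1$ for every $S\in\mathcal{S}$, the sets $T(S)$ are pairwise disjoint, and $|T(S)|=3$ for at least $|\mathcal{S}|/4$ of the sets $S\in\mathcal{S}$. *)

(* Defs.v *)
From mathcomp Require Import all_boot.
Set Implicit Arguments.
Unset Strict Implicit.
Unset Printing Implicit Defensive.

(* Main.v *)
Require Import Defs.
From mathcomp Require Import all_boot zify.
Set Implicit Arguments.
Unset Strict Implicit.
Unset Printing Implicit Defensive.

Section E.
Variables (X I : finType).
Implicit Types (F : I -> {set X}) (d : I -> nat) (f : X -> option I).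

Definition mult2 F := forall e a b c, e \in F a -> e \in F b -> e \in F c ->
  [\/ a = b, b = c | a = c].
Definition goodf F d f := (forall e a, f e = Some a -> e \in F a) /\
  (forall a, #|[set e | f e == Some a]| = d a).

Lemma mult2_sub F F' : (forall a, F' a \subset F a) -> mult2 F -> mult2 F'.
Proof. by move=> s m e a b c ha hb hc; apply: (m e); apply: (subsetP (s _)). Qed.

Lemma card_le_sum F j : #|F j| <= \sum_i #|F i|.
Proof. by rewrite (bigD1 j) //= leq_addr. Qed.

Lemma sum_lt F F' j : (forall i, #|F' i| <= #|F i|) -> #|F' j| < #|F j| ->
  \sum_i #|F' i| < \sum_i #|F i|.
Proof.
move=> le lt; rewrite (bigD1 j) //= [X in _ < X](bigD1 j) //=.
by rewrite -addSn leq_add // leq_sum.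
Qed.

Lemma someE (a b : I) : (Some a == Some b) = (a == b).
Proof. by []. Qed.

Lemma card2 (A : {set X}) x y : x != y -> x \in A -> y \in A ->
  #|A| = #|A :\ x :\ y| + 2.
Proof.
move=> xy xA yA; rewrite (cardsD1 x A) xA (cardsD1 y (A :\ x)) !inE eq_sym xy yA.
lia.
Qed.

Lemma card_nin2 (A : {set X}) x y : x \notin A -> y \notin A ->
  #|A :\ x :\ y| = #|A|.
Proof.
move=> xA yA; rewrite (cardsD1 x A) (cardsD1 y (A :\ x)) !inE (negbTE xA).
by rewrite (negbTE yA) andbF.
Qed.

Lemma triv F d : (forall a, d a = 0) -> exists f, goodf F d f.
Proof.
move=> d0; exists (fun _ => None); split => // a.
rewrite d0 (_ : [set e | _] = set0) ?cards0 //.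
Qed.

Lemma lemE N : forall F d, \sum_i #|F i| <= N -> mult2 F ->
  (forall a, d a * 2 <= #|F a|) -> exists f, goodf F d f.
Proof.
elim: N => [|N IH] F d hN hm hd;
  (case: (pickP (fun a => 0 < d a)) => [j dj | d0]; last first).
- by apply: triv => a; move: (d0 a) => /=; case: (d a).
- have := card_le_sum F j; have := hd j; lia.
- by apply: triv => a; move: (d0 a) => /=; case: (d a).
have F2 : 1 < #|F j| by have := hd j; lia.
case/card_gt1P: F2 => x [y [xF yF xy]].
have other : forall z a b, z \in F j -> z \in F a -> z \in F b -> a != j ->
    b != j -> a = b.
  move=> z a b zj za zb aj bj.
  by case: (hm z a j b za zj zb) => // [e|e]; [move: aj | move: bj];
    rewrite e eqxx.
have caseA : forall z, z \in F j -> (forall a, z \in F a -> a = j) ->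
    exists f, goodf F d f.
  move=> z zj zp.
  pose F' := fun a => F a :\ z.
  pose d' := fun a => if a == j then (d j).-1 else d a.
  have [f' [f'F f'c]] : exists f', goodf F' d' f'.
    apply: IH.
    - rewrite -ltnS; apply: leq_trans hN; apply: (@sum_lt _ _ j) => [a|].
        by rewrite /F' [X in _ <= X](cardsD1 z) leq_addl.
      by rewrite /F' [X in _ < X](cardsD1 z) zj.
    - by apply: mult2_sub hm => a; apply: subD1set.
    move=> a; rewrite /d' /F'; case: eqP => [->|/eqP aj].
      by have := hd j; rewrite (cardsD1 z (F j)) zj; lia.
    have zFa : z \notin F a by apply/negP => /zp /eqP; rewrite (negbTE aj).
    by have := hd a; rewrite (cardsD1 z (F a)) (negbTE zFa).
  have f'z : f' z = None.
    by case E: (f' z) => [a|] //; have := f'F _ _ E; rewrite /F' !inE eqxx.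
  exists (fun e => if e == z then Some j else f' e); split.
    move=> e a; case: eqP => [-> [<-]//|_ /f'F]; rewrite /F' inE.
    by case/andP.
  move=> a; case: (eqVneq a j) => [->|aj].
    rewrite (_ : [set e | _] = z |: [set e | f' e == Some j]); last first.
      apply/setP => e; rewrite !inE; case: (eqVneq e z) => [->|]; rewrite ?eqxx //=. 
    by rewrite cardsU1 f'c /d' eqxx inE f'z /=; lia.
  rewrite (_ : [set e | _] = [set e | f' e == Some a]) ?f'c /d' ?(negbTE aj) //.
  apply/setP => e; rewrite !inE; case: (eqVneq e z) => [->|//].
  by rewrite f'z someE eq_sym (negbTE aj).
case: (boolP [exists a, (x \in F a) && (a != j)]); last first.
  move=> nx; apply: (caseA x xF) => a xa; apply/eqP; apply: contraNT nx => aj.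
  by apply/existsP; exists a; rewrite xa.
case/existsP => i /andP[xi ij].
case: (boolP [exists a, (y \in F a) && (a != j)]); last first.
  move=> ny; apply: (caseA y yF) => a ya; apply/eqP; apply: contraNT ny => aj.
  by apply/existsP; exists a; rewrite ya.
case/existsP => k /andP[yk kj].
have xonly : forall a, x \in F a -> a = i \/ a = j.
  move=> a xa; case: (eqVneq a j) => [->|aj]; [by right|left].
  exact: (other x a i xF xa xi aj ij).
have yonly : forall a, y \in F a -> a = k \/ a = j.
  move=> a ya; case: (eqVneq a j) => [->|aj]; [by right|left].
  exact: (other y a k yF ya yk aj kj).
have nxa : forall a, a != i -> a != j -> x \notin F a.
  by move=> a ai aj; apply/negP => /xonly [] /eqP; rewrite ?(negbTE ai) ?(negbTE aj).
have nya : forall a, a != k -> a != j -> y \notin F a.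
  by move=> a ak aj; apply/negP => /yonly [] /eqP; rewrite ?(negbTE ak) ?(negbTE aj).
case: (eqVneq i k) => [ik|ik].
  subst k.
  pose F' := fun a => F a :\ x :\ y.
  pose d' := fun a => if a == j then (d j).-1 else if a == i then (d i).-1 else d a.
  have [f' [f'F f'c]] : exists f', goodf F' d' f'.
    apply: IH.
    - rewrite -ltnS; apply: leq_trans hN; apply: (@sum_lt _ _ j) => [a|].
        by apply: subset_leq_card; rewrite /F' (subset_trans (subD1set _ _)) ?subD1set.
      by rewrite /F' [X in _ < X](card2 xy xF yF) addn2.
    - by apply: mult2_sub hm => a; rewrite /F' (subset_trans (subD1set _ _)) ?subD1set.
    move=> a; rewrite /d' /F'; case: (eqVneq a j) => [->|aj].
      by have := hd j; rewrite (card2 xy xF yF); lia.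
    case: (eqVneq a i) => [->|ai].
      by have := hd i; rewrite (card2 xy xi yk); lia.
    by rewrite card_nin2 ?nxa ?nya.
  have f'x : f' x = None.
    by case E: (f' x) => [a|] //; have := f'F _ _ E; rewrite /F' !inE eqxx /= ?andbF.
  have f'y : f' y = None.
    by case E: (f' y) => [a|] //; have := f'F _ _ E; rewrite /F' !inE eqxx /= ?andbF.
  exists (fun e => if e == x then Some j else if (e == y) && (0 < d i) then Some i else f' e); split.
    move=> e a; case: eqP => [-> [<-]//|_]; case: ifP => [/andP[/eqP-> _] [<-] //|_ /f'F].
    by rewrite /F' !inE => /andP[_ /andP[_]].
  move=> a; case: (eqVneq a j) => [->|aj].
    rewrite (_ : [set e | _] = x |: [set e | f' e == Some j]); last first.
      apply/setP => e; rewrite !inE; case: (eqVneq e x) => [->|ex]; rewrite ?eqxx //=.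
      case: (eqVneq e y) => [->|ey] //=; rewrite f'y; case: ifP => //.
      by rewrite someE (negbTE ij).
    by rewrite cardsU1 f'c /d' eqxx inE f'x /=; lia.
  case: (eqVneq a i) => [->|ai].
    rewrite (_ : [set e | _] = if 0 < d i then y |: [set e | f' e == Some i]
                                else [set e | f' e == Some i]); last first.
      apply/setP => e; case: (0 < d i); rewrite !inE; (case: (eqVneq e x) => [->|ex];
        [rewrite f'x someE (eq_sym j) (negbTE ij) ?(negbTE xy) //
        | case: (eqVneq e y) => [->|ey] /=; rewrite ?f'y ?eqxx //]).
    have := f'c i; rewrite /d' (negbTE ij) eqxx.
    case: ifP => hdi; rewrite ?cardsU1 ?inE ?f'y /= => ->; lia.
  rewrite (_ : [set e | _] = [set e | f' e == Some a]) ?f'c /d' ?(negbTE aj) ?(negbTE ai) //.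
  apply/setP => e; rewrite !inE; case: (eqVneq e x) => [->|ex].
    by rewrite f'x someE eq_sym (negbTE aj).
  case: ifP => // /andP[/eqP -> _].
  by rewrite f'y someE eq_sym (negbTE ai).
have xnk : x \notin F k.
  by apply/negP => /xonly [] /eqP; rewrite ?(negbTE kj) // eq_sym (negbTE ik).
have yni : y \notin F i.
  by apply/negP => /yonly [] /eqP; rewrite ?(negbTE ij) // (negbTE ik).
pose F' := fun a => if a == j then F j :\ x :\ y
                    else if a == k then x |: (F k :\ y) else F a.
pose d' := fun a => if a == j then (d j).-1 else d a.
have F'char : forall e a, e \in F' a -> e \in F a \/ (e = x /\ a = k).
  move=> e a; rewrite /F'; case: (eqVneq a j) => [->|aj].
    by rewrite !inE => /and3P[_ _ ->]; left.
  case: (eqVneq a k) => [->|ak]; last by left.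
  by rewrite !inE => /orP[/eqP->|/andP[_ ->]]; [right|left].
have F'x : forall a, x \in F' a -> a = i \/ a = k.
  move=> a; rewrite /F'; case: (eqVneq a j) => [->|aj].
    by rewrite !inE eqxx /= andbF.
  case: (eqVneq a k) => [->|ak]; first by right.
  by move/xonly => [->|/eqP]; [left|rewrite (negbTE aj)].
have F'y : forall a, y \notin F' a.
  move=> a; rewrite /F'; case: (eqVneq a j) => [_|aj].
    by rewrite !inE eqxx.
  case: (eqVneq a k) => [_|ak]; first by rewrite !inE eqxx /= ?andbF ?orbF; rewrite eq_sym; case: eqP xy => // ->; rewrite eqxx.
  by rewrite nya.
have [f' [f'F f'c]] : exists f', goodf F' d' f'.
  apply: IH.
  - rewrite -ltnS; apply: leq_trans hN; apply: (@sum_lt _ _ j) => [a|].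
      rewrite /F'; case: (eqVneq a j) => [->|aj].
        by apply: subset_leq_card; rewrite (subset_trans (subD1set _ _)) ?subD1set.
      case: (eqVneq a k) => [->|ak] //.
      by rewrite cardsU1 [X in _ <= X](cardsD1 y) yk leq_add2r leq_b1.
    by rewrite /F' eqxx [X in _ < X](card2 xy xF yF) addn2.
  - move=> e a b c ha hb hc; case: (eqVneq e x) => [ex|ex].
      subst e; case: (F'x a ha) => ->; case: (F'x b hb) => ->; case: (F'x c hc) => ->;
        by [apply: Or31 | apply: Or32 | apply: Or33].
    have G : forall a, e \in F' a -> e \in F a.
      by move=> a' /F'char [//|[/eqP]]; rewrite (negbTE ex).
    exact: hm (G _ ha) (G _ hb) (G _ hc).
  move=> a; rewrite /d' /F'; case: (eqVneq a j) => [_|aj].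
    by have := hd j; rewrite (card2 xy xF yF); lia.
  case: (eqVneq a k) => [ak|ak] //; subst a.
  have := hd k; rewrite (cardsD1 y (F k)) yk cardsU1 !inE (negbTE xnk) andbF /=; lia.
have f'y : f' y = None.
  by case E: (f' y) => [a|] //; have := f'F _ _ E; rewrite (negbTE (F'y a)).
have f'xj : f' x != Some j.
  apply/eqP => E; have := f'F _ _ E; rewrite /F' eqxx !inE eqxx /= andbF.
  by [].
pose b := f' x == Some k.
exists (fun e => if e == y then (if b then Some k else Some j)
                 else if e == x then (if b then Some j else f' e) else f' e); split.
  move=> e a; case: (eqVneq e y) => [->|ey]; first by case: b => -[<-].
  case: (eqVneq e x) => [->|ex].
    case hb: b; first by case=> <-.
    move=> fx; have := f'F _ _ fx; case/F'char => [//|[_ ak]].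
    by rewrite /b fx ak eqxx in hb.
  by move=> /f'F /F'char [//|[/eqP]]; rewrite (negbTE ex).
move=> a; case: (eqVneq a j) => [->|aj].
  rewrite (_ : [set e | _] = (if b then x else y) |: [set e | f' e == Some j]); last first.
    apply/setP => e; rewrite !inE; case: (eqVneq e y) => [->|ey].
      by case: b; rewrite ?eqxx ?f'y // someE (negbTE kj) eq_sym (negbTE xy).
    case: (eqVneq e x) => [->|ex].
      by case: b; rewrite ?eqxx // (negbTE xy).
    by case: b; rewrite ?(negbTE ex) ?(negbTE ey).
  rewrite cardsU1 f'c /d' eqxx.
  have -> : (if b then x else y) \notin [set e | f' e == Some j].
    by case: b; rewrite inE ?f'y // f'xj.
  by rewrite add1n prednK.
have f'ck := f'c a; rewrite /d' (negbTE aj) in f'ck.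
case: (eqVneq a k) => [ak|ak].
  subst a; case hb: b.
    rewrite (_ : [set e | _] = y |: ([set e | f' e == Some k] :\ x)); last first.
      apply/setP => e; rewrite !inE; case: (eqVneq e y) => [->|ey].
        by rewrite eqxx.
      case: (eqVneq e x) => [->|ex] //=.
      by rewrite someE eq_sym (negbTE kj).
    rewrite cardsU1 !inE f'y andbF /=.
    by move: f'ck; rewrite (cardsD1 x [set e | _]) inE -/b hb => <-.
  rewrite (_ : [set e | _] = [set e | f' e == Some k]) //.
  apply/setP => e; rewrite !inE; case: (eqVneq e y) => [->|ey].
    by rewrite f'y someE eq_sym (negbTE kj).
  by case: (eqVneq e x) => [->|ex] //=; rewrite -/b hb.
rewrite (_ : [set e | _] = [set e | f' e == Some a]) //.
apply/setP => e; rewrite !inE; case: (eqVneq e y) => [->|ey].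
  by case: b; rewrite f'y someE eq_sym ?(negbTE ak) ?(negbTE aj).
case: (eqVneq e x) => [->|ex] //=.
by case hb: b => //; rewrite someE eq_sym (negbTE aj); move: hb; rewrite /b => /eqP ->;
  rewrite someE eq_sym (negbTE ak).
Qed.
End E.
Lemma sum_mem (T : finType) (B C : {set T}) :
  \sum_(y in B) (y \in C : nat) = #|B :&: C|.
Proof.
rewrite -sum1_card (eq_bigr (fun y => if y \in C then 1 else 0)); last by move=> y _; case: (y \in C).
rewrite -big_mkcondr; apply: eq_bigl => y; by rewrite !inE.
Qed.

Lemma card_bigcup_le (I T : finType) (A : {pred I}) (F : I -> {set T}) :
  #|\bigcup_(i in A) F i| <= \sum_(i in A) #|F i|.
Proof.
elim/big_rec2: _ => [|i U n _ IH]; first by rewrite cards0.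
by apply: leq_trans (leq_card_setU _ _) _; rewrite leq_add2l.
Qed.

Section P2.
Variables (X : finType) (Sc : {set {set X}}) (T0 : {set X} -> {set X}).
Hypothesis T0in : forall e S, e \in T0 S -> S \in Sc /\ e \in S.
Hypothesis T0c : forall S, S \in Sc -> #|T0 S| = 2.
Hypothesis T0d : forall e S S', e \in T0 S -> e \in T0 S' -> S = S'.
Hypothesis h4 : forall S, S \in Sc -> #|S| = 4.
Hypothesis hm : forall e S1 S2 S3, S1 \in Sc -> S2 \in Sc -> S3 \in Sc ->
  e \in S1 -> e \in S2 -> e \in S3 -> [\/ S1 = S2, S2 = S3 | S1 = S3].

Definition valid (A : {set {set X}}) (g : {set X} -> X) :=
  [/\ A \subset Sc,
      forall v, v \in A -> g v \in v /\ g v \notin T0 v,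
      forall v v', v \in A -> v' \in A -> g v = g v' -> v = v',
      forall v v' u, v \in A -> v' \in A -> g v \in T0 u -> g v' \in T0 u -> v = v'
    & forall v v', v \in A -> v' \in A -> g v \notin T0 v'].

Lemma T0le2 S : #|T0 S| <= 2.
Proof.
case: (boolP (S \in Sc)) => [/T0c -> //|nS].
rewrite leqNgt; apply/negP => h; have /card_gt0P [e /T0in [hS _]] : 0 < #|T0 S| by apply: leq_trans h.
by rewrite hS in nS.
Qed.

Lemma extend A g : valid A g -> 4 * #|A| < #|Sc| ->
  exists A' g', valid A' g' /\ #|A| < #|A'|.
Proof.
move=> [AS V1 V2 V3 V4] lt.
pose Bv v := T0 v :|: (g v |: (if [pick u | g v \in T0 u] is Some u then T0 u else set0)).
pose B := \bigcup_(v in A) Bv v.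
pose Free := [set w in Sc | (w \notin A) && [forall v in A, g v \notin T0 w]].
pose ow v := odflt v [pick u | g v \in T0 u].
have picku : forall v u, g v \in T0 u -> [pick u | g v \in T0 u] = Some u.
  move=> v u hu; case: pickP => [u' hu'|none]; first by rewrite (T0d hu' hu).
  by rewrite none in hu.
have Bcard : #|B| <= 4 * #|A|.
  apply: leq_trans (card_bigcup_le _ _) _.
  rewrite mulnC -sum_nat_const; apply: leq_sum => v vA.
  apply: leq_trans (leq_card_setU _ _) _.
  rewrite T0c ?(subsetP AS) // -[4]/(2 + 2) leq_add2l.
  case: pickP => [u hu|_]; last by rewrite cardsU1 cards0 inE.
  by rewrite cardsU1 hu T0le2.
have Sccov : #|Sc| <= #|A| + #|A| + #|Free|.
  have sub : Sc \subset A :|: [set ow v | v in A] :|: Free.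
    apply/subsetP => S hS; rewrite !inE.
    case: (boolP (S \in A)) => //= nA.
    case: (boolP [forall v in A, g v \notin T0 S]) => hf; first by apply/orP; right; apply/andP; split.
    case/forall_inPn: hf => v vA; rewrite negbK => hv.
    apply/orP; left; apply/imsetP; exists v => //.
    by rewrite /ow (picku _ _ hv).
  apply: leq_trans (subset_leq_card sub) _.
  apply: leq_trans (leq_card_setU _ _) _; rewrite leq_add2r.
  by apply: leq_trans (leq_card_setU _ _) _; rewrite leq_add2l leq_imset_card.
have Bchar : forall y, y \in B -> exists z, [/\ z \in Sc, y \in z & z \notin Free].
  move=> y /bigcupP [v vA]; rewrite /Bv !inE.
  have vF : v \notin Free by rewrite inE vA /= andbF.
  case/orP => [/T0in [hv yv]|/orP [/eqP ->|]]; first by exists v.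
    by exists v; split; rewrite ?(subsetP AS) //; case: (V1 v vA).
  case: pickP => [u hu|_]; last by rewrite inE.
  move=> /T0in [uS yu]; exists u; split => //.
  rewrite inE negb_and uS /= negb_and; apply/orP; right.
  by apply/forall_inPn; exists v => //; rewrite negbK.
have [w wF [y yo ynB]] : exists2 w, w \in Free & exists2 y, y \in w :\: T0 w & y \notin B.
  case: (boolP [forall w in Free, w :\: T0 w \subset B]) => hall; last first.
    case/forall_inPn: hall => w wF /subsetPn [y yo ynB].
    by exists w => //; exists y.
  have out2 : forall w, w \in Free -> #|w :\: T0 w| = 2.
    move=> w; rewrite inE => /andP [wS _].
    have sub : T0 w \subset w by apply/subsetP => e /T0in [].
    by rewrite cardsD (setIidPr sub) h4 // T0c.
  have : 2 * #|Free| <= #|B|.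
    rewrite mulnC -sum_nat_const.
    rewrite (eq_bigr (fun w => \sum_(y in B) (y \in w :\: T0 w : nat))); last first.
      move=> w wF; rewrite sum_mem (setIidPr _) ?out2 //.
      exact: (forall_inP hall).
    rewrite exchange_big /= -sum1_card; apply: leq_sum => y yB.
    rewrite (eq_bigr (fun w => (w \in [set w' in Free | y \in w' :\: T0 w'] : nat))); last first.
      by move=> w wF; rewrite in_set wF.
    rewrite sum_mem; apply/card_le1_eqP => w1 w2.
    move=> /setIP [_ /setIdP [w1F /setDP [yw1 _]]] /setIP [_ /setIdP [w2F /setDP [yw2 _]]].
    have [z [zS yz zF]] := Bchar y yB.
    move: (w1F) (w2F); rewrite !inE => /andP [w1S _] /andP [w2S _].
    case: (hm zS w1S w2S yz yw1 yw2) => // E; subst z.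
      by rewrite w1F in zF.
    by rewrite w2F in zF.
  lia.
move: wF; rewrite inE => /and3P [wS wA /forall_inP hwf].
move: yo; rewrite inE => /andP [yT0 yw].
have yB : forall v, v \in A -> y \in Bv v -> False.
  move=> v vA yv; move: ynB => /bigcupP; apply; by exists v.
have yT : forall v, v \in A -> y \notin T0 v.
  by move=> v vA; apply/negP => h; apply: (yB v vA); rewrite /Bv inE h.
have yg : forall v, v \in A -> y != g v.
  by move=> v vA; apply/negP => h; apply: (yB v vA); rewrite /Bv !inE h orbT.
have yu : forall v u, v \in A -> g v \in T0 u -> y \notin T0 u.
  move=> v u vA hu; apply/negP => h; apply: (yB v vA).
  by rewrite /Bv !inE (picku _ _ hu) h !orbT.
have vw : forall v, v \in A -> (v == w) = false.
  by move=> v vA; apply/negP => /eqP E; rewrite -E vA in wA.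
exists (w |: A), (fun S => if S == w then y else g S); split; last first.
  by rewrite cardsU1 wA.
split.
- by apply/subsetP => S; rewrite in_setU1 => /predU1P [->|/(subsetP AS)].
- move=> v; rewrite in_setU1 => /predU1P [->|vA]; first by rewrite eqxx.
  by rewrite vw //; apply: V1.
- move=> v v'; rewrite !in_setU1 => /predU1P [->|vA] /predU1P [->|vA'];
    rewrite ?eqxx ?vw //.
  + by move=> E; move: (yg v' vA'); rewrite E eqxx.
  + by move=> E; move: (yg v vA); rewrite E eqxx.
  + exact: V2.
- move=> v v' u; rewrite !in_setU1 => /predU1P [->|vA] /predU1P [->|vA'];
    rewrite ?eqxx ?vw //.
  + by move=> h1 h2; move: (yu _ _ vA' h2); rewrite h1.
  + by move=> h1 h2; move: (yu _ _ vA h1); rewrite h2.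
  + exact: V3.
- move=> v v'; rewrite !in_setU1 => /predU1P [->|vA] /predU1P [->|vA'];
    rewrite ?eqxx ?vw //.
  + exact: yT.
  + exact: hwf.
  + exact: V4.
Qed.

Lemma phase2 : exists T : {set X} -> {set X},
  [/\ (forall S, S \in Sc -> T S \subset S),
      (forall S, S \in Sc -> 1 <= #|T S|),
      (forall S S', S \in Sc -> S' \in Sc -> S != S' -> [disjoint T S & T S']) &
      #|Sc| <= 4 * #|[set S in Sc | #|T S| == 3]| ].
Proof.
case: (set_0Vmem Sc) => [Sc0|[S0 hS0]].
  by exists (fun _ => set0); split => [S|S|S S'|]; rewrite ?Sc0 ?inE ?cards0.
have : 0 < #|S0| by rewrite h4.
case/card_gt0P => x0 _.
have iter : forall m, exists A g, valid A g /\ (m <= #|A| \/ #|Sc| <= 4 * #|A|).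
  elim=> [|m [A [g [vAg hm']]]].
    exists set0, (fun _ => x0); split; last by left.
    by split => [|v|v v'|v v' u|v v']; rewrite ?sub0set ?inE.
  case: (leqP #|Sc| (4 * #|A|)) => [hle|hlt]; first by exists A, g; split; [|right].
  case: hm' => [hmA|]; last by rewrite leqNgt hlt.
  have [A' [g' [v' lt']]] := extend vAg hlt.
  by exists A', g'; split => //; left; apply: leq_ltn_trans hmA lt'.
have [A [g [[AS V1 V2 V3 V4] hA]]] := iter #|Sc|.
have hA4 : #|Sc| <= 4 * #|A|.
  by case: hA => // h; apply: leq_trans h _; rewrite leq_pmull.
exists (fun S => if S \in A then g S |: T0 S else T0 S :\: [set g v | v in A]); split.
- move=> S hS; case: ifP => SA; apply/subsetP => e.
    rewrite in_setU1 => /predU1P [->|/T0in []//]; by case: (V1 S SA).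
  by rewrite inE => /andP [_ /T0in []].
- move=> S hS; case: ifP => SA.
    by rewrite cardsU1; case: (V1 S SA) => _ ->; rewrite T0c.
  rewrite cardsD T0c //.
  have : #|T0 S :&: [set g v | v in A]| <= 1.
    apply/card_le1_eqP => e1 e2 /setIP [h1 /imsetP [v1 v1A E1]] /setIP [h2 /imsetP [v2 v2A E2]]; subst e1 e2.
    by rewrite (V3 _ _ _ v1A v2A h1 h2).
  lia.
- move=> S S' hS hS' SS'; rewrite -setI_eq0; apply/eqP/setP => e.
  rewrite inE in_set0; apply/negP => /andP [].
  have ne : S = S' -> False by move=> E; rewrite E eqxx in SS'.
  case: ifP => SA; case: ifP => S'A.
  + rewrite !in_setU1 => /predU1P [->|h1] /predU1P [E|h2].
    * exact: ne (V2 _ _ SA S'A E).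
    * by move: (V4 _ _ SA S'A); rewrite h2.
    * by move: (V4 _ _ S'A SA); rewrite -E h1.
    * exact: ne (T0d h1 h2).
  + rewrite in_setU1 inE => /predU1P [->|h1] /andP [h2 h3].
      by move: h2 => /negP; apply; apply/imsetP; exists S.
    exact: ne (T0d h1 h3).
  + rewrite in_setU1 inE => /andP [h2 h3] /predU1P [E|h1].
      by move: h2; rewrite E => /negP; apply; apply/imsetP; exists S'.
    exact: ne (T0d h3 h1).
  + rewrite !inE => /andP [_ h1] /andP [_ h2].
    exact: ne (T0d h1 h2).
- apply: leq_trans hA4 _; rewrite leq_mul2l /=; apply: subset_leq_card.
  apply/subsetP => S SA; rewrite inE (subsetP AS) //= SA cardsU1 T0c ?(subsetP AS) //.
  by case: (V1 S SA) => _ ->.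
Qed.

End P2.

Unset Implicit Arguments.
Set Strict Implicit.

Theorem lemma11p5 (K : nat) (Sc : {set {set 'I_K}})
  (h4 : forall S, S \in Sc -> #|S| = 4)
  (h2 : forall j : 'I_K, #|[set S in Sc | j \in S]| <= 2) :
  exists T : {set 'I_K} -> {set 'I_K},
    [/\ (forall S, S \in Sc -> T S \subset S),
        (forall S, S \in Sc -> 1 <= #|T S|),
        (forall S S', S \in Sc -> S' \in Sc -> S != S' -> [disjoint T S & T S']) &
        #|Sc| <= 4 * #|[set S in Sc | #|T S| == 3]| ].
Proof.
have hm : forall e S1 S2 S3, S1 \in Sc -> S2 \in Sc -> S3 \in Sc ->
    e \in S1 -> e \in S2 -> e \in S3 -> [\/ S1 = S2, S2 = S3 | S1 = S3].
  move=> e S1 S2 S3 i1 i2 i3 e1 e2 e3.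
  case: (eqVneq S1 S2) => [E|n12]; first by apply: Or31.
  case: (eqVneq S2 S3) => [E|n23]; first by apply: Or32.
  case: (eqVneq S1 S3) => [E|n13]; first by apply: Or33.
  have sub : (S1 |: (S2 |: [set S3])) \subset [set S in Sc | e \in S].
    apply/subsetP => S; rewrite !inE => /orP [|/orP []] /eqP ->; by apply/andP.
  have := subset_leq_card sub; rewrite !cardsU1 cards1 !inE.
  rewrite (negbTE n12) (negbTE n13) (negbTE n23) /=.
  by move=> h; exfalso; move: (leq_trans h (h2 e)).
pose F := fun S : {set 'I_K} => if S \in Sc then S else set0.
pose d := fun S : {set 'I_K} => if S \in Sc then 2 else 0.
have [f [fF fc]] : exists f, goodf F d f.
  apply: (@lemE _ _ (\sum_i #|F i|)) => //.
  - move=> e a b c; rewrite /F; case: ifP => ha; last by rewrite inE.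
    case: ifP => hb; last by move=> _; rewrite inE.
    case: ifP => hc; last by move=> _ _; rewrite inE.
    exact: hm.
  - by move=> a; rewrite /d /F; case: ifP => ha //; rewrite h4.
pose T0 := fun S => [set e | f e == Some S].
apply: (@phase2 _ Sc T0).
- move=> e S; rewrite inE => /eqP /fF; rewrite /F; case: ifP => hS //.
  by rewrite inE.
- by move=> S hS; rewrite fc /d hS.
- by move=> e S S'; rewrite !inE => /eqP -> /eqP [].
- exact: h4.
- exact: hm.
Qed.
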